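(* Let $A_1,A_2,B_1,B_2,C_1,C_2$ be pairwise intersecting compact convex sets in the plane (not necessarily distinct). Suppose $o(A_1A_2B_1B_2)=o(A_1A_2C_1C_2)=o(B_1B_2C_1C_2)=0$, $o(A_1B_1C_1)\ne0$ and $o(A_2B_2C_2)\ne0$. Then $o(A_1B_1C_1)=o(A_2B_2C_2)$.
   Context: For three pairwise intersecting compact convex sets $X,Y,Z$ in the plane: $o(XYZ)=0$ if $X\cap Y\cap Z\neq\emptyset$; otherwise $o(XYZ)=o(xyz)$ for any $x\in Y\cap Z$, $y\in X\cap Z$, $z\in X\cap Y$, where for points $o(xyz)=+1$ for a counterclockwise and $-1$ for a clockwise triangle (independent of the choice). For sets $X_1,\dots,X_n$, the shorthand $o(X_1\dots X_n)=0$ means $o(X_iX_jX_k)=0$ for all $i<j<k$. *)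

(* Defs.v *)
From Stdlib Require Import Reals Lra List ClassicalEpsilon.
Open Scope R_scope.

Definition point := (R * R)%type.
Definition pset := point -> Prop.

Definition convex (S : pset) : Prop :=
  forall p q : point, forall t : R, 0 <= t <= 1 -> S p -> S q ->
    S (fst p + t * (fst q - fst p), snd p + t * (snd q - snd p)).

Definition closed (S : pset) : Prop :=
  forall p : point, ~ S p -> exists eps, 0 < eps /\
    forall q : point, (fst q - fst p)^2 + (snd q - snd p)^2 < eps^2 -> ~ S q.

Definition bounded (S : pset) : Prop :=
  exists M, forall p : point, S p -> Rabs (fst p) <= M /\ Rabs (snd p) <= M.

(* Compact subsets of R^2 (Heine-Borel). *)
Definition compact (S : pset) : Prop := closed S /\ bounded S.

Definition compact_convex (S : pset) : Prop := compact S /\ convex S.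

Definition intersect (X Y : pset) : Prop := exists p, X p /\ Y p.

Definition pairwise_intersecting (L : list pset) : Prop :=
  forall X Y, In X L -> In Y L -> intersect X Y.

(* orientation of a point triple: +1 ccw, -1 cw, 0 collinear *)
Definition det3 (x y z : point) : R :=
  (fst y - fst x) * (snd z - snd x) - (snd y - snd x) * (fst z - fst x).

Definition orient (x y z : point) : Z :=
  match Rlt_dec 0 (det3 x y z) with
  | left _ => 1%Z
  | right _ => match Rlt_dec (det3 x y z) 0 with
               | left _ => (-1)%Z
               | right _ => 0%Z
               end
  end.

Definition witness_pts (X Y W : pset) (t : point * point * point) : Prop :=
  let '(x, y, z) := t in
  (Y x /\ W x) /\ (X y /\ W y) /\ (X z /\ Y z).

Definition point0 : point := (0, 0).

(* o(XYZ): 0 if X∩Y∩Z nonempty, otherwise o(xyz) for a (chosen)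
   x ∈ Y∩Z, y ∈ X∩Z, z ∈ X∩Y (independent of the choice, per the paper). *)
Definition o3 (X Y W : pset) : Z :=
  if excluded_middle_informative (exists p, X p /\ Y p /\ W p) then 0%Z
  else let t := epsilon (inhabits (point0, point0, point0)) (witness_pts X Y W) in
       let '(x, y, z) := t in orient x y z.

(* o(X1 X2 X3 X4) = 0 : all four triples i<j<k have o = 0 *)
Definition o4_zero (X1 X2 X3 X4 : pset) : Prop :=
  o3 X1 X2 X3 = 0%Z /\ o3 X1 X2 X4 = 0%Z /\ o3 X1 X3 X4 = 0%Z /\ o3 X2 X3 X4 = 0%Z.

(* Main.v *)
Require Import Defs.
From Stdlib Require Import Reals List ZArith.
From Stdlib Require Import Lra Psatz Classical ClassicalEpsilon.
Open Scope R_scope.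

Lemma div_bounds a b : 0 <= a -> a <= b -> 0 < b -> 0 <= a/b <= 1.
Proof.
  intros. assert (a/b*b = a) by (field; lra). split; nra.
Qed.

Lemma convex_pt (S : pset) p q t u : convex S -> S p -> S q -> 0 <= t <= 1 ->
  fst u = fst p + t * (fst q - fst p) -> snd u = snd p + t * (snd q - snd p) -> S u.
Proof.
  intros H Hp Hq Ht E1 E2. destruct u as [u1 u2]; simpl in *; subst u1 u2. apply H; auto.
Qed.

Lemma tri (S : pset) p q r a b c u : convex S -> S p -> S q -> S r ->
  0 <= a -> 0 <= b -> 0 <= c -> a + b + c = 1 ->
  fst u = a * fst p + b * fst q + c * fst r ->
  snd u = a * snd p + b * snd q + c * snd r -> S u.
Proof.
  intros H Hp Hq Hr Ha Hb Hc Hs E1 E2.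
  destruct (Req_dec (a+b) 0) as [Z|Z].
  - assert (a = 0) by lra. assert (b = 0) by lra. assert (c = 1) by lra. subst.
    apply (convex_pt S r r 0 u H Hr Hr); try lra.
  - assert (Hm : S (fst p + (b/(a+b)) * (fst q - fst p), snd p + (b/(a+b)) * (snd q - snd p))).
    { apply H; auto. apply div_bounds; lra. }
    apply (convex_pt S _ r c u H Hm Hr); [lra| |]; simpl; rewrite ?E1, ?E2;
      replace c with (1 - a - b) by lra; field; lra.
Qed.

Lemma sumsq0 a b : a*a + b*b = 0 -> a = 0 /\ b = 0.
Proof. intros; split; nra. Qed.
Lemma sumsq_pos a b : a*a + b*b <> 0 -> 0 < a*a + b*b.
Proof. intros. assert (0 <= a*a) by nra. assert (0 <= b*b) by nra. lra. Qed.

Definition betw (p q u : point) : Prop := exists t, 0 <= t <= 1 /\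
  fst u = fst p + t * (fst q - fst p) /\ snd u = snd p + t * (snd q - snd p).

Lemma betw_in S p q u : convex S -> S p -> S q -> betw p q u -> S u.
Proof. intros H Hp Hq [t [Ht [E1 E2]]]. exact (convex_pt S p q t u H Hp Hq Ht E1 E2). Qed.

Lemma collinear x y z : det3 x y z = 0 -> betw x z y \/ betw x y z \/ betw y z x.
Proof.
  destruct x as [x1 x2], y as [y1 y2], z as [z1 z2]. unfold det3, betw; simpl. intro Hd.
  set (d := (z1-x1)*(z1-x1) + (z2-x2)*(z2-x2)).
  destruct (Req_dec d 0) as [D|D].
  - assert (x1 = z1 /\ x2 = z2) as [-> ->] by (unfold d in D; destruct (sumsq0 _ _ D); split; lra).
    right; right. exists 1. split; [lra|]. split; ring.
  - assert (Dp : 0 < d) by (unfold d in *; clear -D; apply sumsq_pos; auto).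
    set (t := ((y1-x1)*(z1-x1)+(y2-x2)*(z2-x2))/d).
    assert (E1 : (y1 - x1)*d - ((y1-x1)*(z1-x1)+(y2-x2)*(z2-x2))*(z1-x1)
       = (z2-x2)*((y1 - x1) * (z2 - x2) - (y2 - x2) * (z1 - x1))) by (unfold d; ring).
    assert (E2 : (y2 - x2)*d - ((y1-x1)*(z1-x1)+(y2-x2)*(z2-x2))*(z2-x2)
       = -(z1-x1)*((y1 - x1) * (z2 - x2) - (y2 - x2) * (z1 - x1))) by (unfold d; ring).
    rewrite Hd in E1, E2.
    assert (Hy1 : y1 = x1 + t*(z1-x1)).
    { replace (t*(z1-x1)) with (((y1-x1)*(z1-x1)+(y2-x2)*(z2-x2))*(z1-x1)/d) by (unfold t; field; lra).
      replace (((y1-x1)*(z1-x1)+(y2-x2)*(z2-x2))*(z1-x1)) with ((y1-x1)*d) by lra.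
      field; lra. }
    assert (Hy2 : y2 = x2 + t*(z2-x2)).
    { replace (t*(z2-x2)) with (((y1-x1)*(z1-x1)+(y2-x2)*(z2-x2))*(z2-x2)/d) by (unfold t; field; lra).
      replace (((y1-x1)*(z1-x1)+(y2-x2)*(z2-x2))*(z2-x2)) with ((y2-x2)*d) by lra.
      field; lra. }
    clearbody t.
    destruct (Rlt_or_le 1 t) as [T1|T1]; [|destruct (Rlt_or_le t 0) as [T0|T0]].
    + right; left. exists (1/t). split; [apply div_bounds; lra|].
      rewrite Hy1, Hy2. split; field; lra.
    + right; right. exists (-t/(1-t)). split; [apply div_bounds; lra|].
      rewrite Hy1, Hy2. split; field; lra.
    + left. exists t. split; [lra|]. split; assumption.
Qed.

Definition triple (X Y Z : pset) := exists p, X p /\ Y p /\ Z p.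

Lemma nondeg X Y Z x y z : convex X -> convex Y -> convex Z -> ~ triple X Y Z ->
  witness_pts X Y Z (x,y,z) -> det3 x y z <> 0.
Proof.
  intros cX cY cZ N W Hd. simpl in W.
  destruct (collinear x y z Hd) as [B|[B|B]]; apply N.
  - exists y. assert (Y y) by (apply (betw_in Y x z y); tauto). tauto.
  - exists z. assert (Z z) by (apply (betw_in Z x y z); tauto). tauto.
  - exists x. assert (X x) by (apply (betw_in X y z x); tauto). tauto.
Qed.

Lemma sign_first X Y Z x x' y z : convex X -> convex Y -> convex Z -> ~ triple X Y Z ->
  witness_pts X Y Z (x,y,z) -> witness_pts X Y Z (x',y,z) -> det3 x y z * det3 x' y z > 0.
Proof.
  intros cX cY cZ N W W'.
  pose proof (nondeg X Y Z x y z cX cY cZ N W) as D1.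
  pose proof (nondeg X Y Z x' y z cX cY cZ N W') as D2.
  set (d := det3 x y z) in *. set (d' := det3 x' y z) in *.
  destruct (Rlt_or_le 0 (d*d')) as [P|P]; [lra|exfalso].
  assert (Q : d * d' < 0).
  { destruct (Rle_lt_or_eq_dec _ _ P) as [|E]; auto.
    apply Rmult_integral in E; tauto. }
  assert (Dd : d - d' <> 0) by nra.
  set (t := d / (d - d')).
  assert (Ht : t * (d - d') = d) by (unfold t; field; auto).
  assert (Tb : 0 <= t <= 1) by (clearbody t; split; nra).
  set (w := (fst x + t * (fst x' - fst x), snd x + t * (snd x' - snd x))).
  simpl in W, W'.
  assert (Yw : Y w) by (apply cY; tauto).
  assert (Zw : Z w) by (apply cZ; tauto).
  apply (nondeg X Y Z w y z cX cY cZ N); [simpl; tauto|].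
  assert (E : det3 w y z = d + t * (d' - d)) by (unfold w, d, d', det3; simpl; ring).
  rewrite E. unfold t. field. auto.
Qed.

Lemma det_rot x y z : det3 x y z = det3 y z x.
Proof. unfold det3; ring. Qed.

Lemma prod_sign a b : a * b > 0 -> (0 < a /\ 0 < b) \/ (a < 0 /\ b < 0).
Proof.
  intros H. destruct (Rtotal_order a 0) as [A|[A|A]]; destruct (Rtotal_order b 0) as [B|[B|B]];
  subst; try (rewrite ?Rmult_0_l, ?Rmult_0_r in H; lra); auto.
  - assert (a*b < 0) by (apply Rmult_neg_pos; lra). lra.
  - assert (a*b < 0) by (rewrite Rmult_comm; apply Rmult_neg_pos; lra). lra.
Qed.
Lemma prod_trans a b c : a * b > 0 -> b * c > 0 -> a * c > 0.
Proof. intros H1 H2. destruct (prod_sign _ _ H1), (prod_sign _ _ H2); try lra.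
  - apply Rmult_lt_0_compat; lra.
  - replace (a*c) with ((-a)*(-c)) by ring. apply Rmult_lt_0_compat; lra. Qed.

Lemma indep X Y Z x y z x' y' z' : convex X -> convex Y -> convex Z -> ~ triple X Y Z ->
  witness_pts X Y Z (x,y,z) -> witness_pts X Y Z (x',y',z') ->
  det3 x y z * det3 x' y' z' > 0.
Proof.
  intros cX cY cZ N W W'. simpl in W, W'.
  assert (N2 : ~ triple Y Z X) by (intros [p Hp]; apply N; exists p; tauto).
  assert (N3 : ~ triple Z X Y) by (intros [p Hp]; apply N; exists p; tauto).
  assert (P1 : det3 x y z * det3 x' y z > 0) by (apply (sign_first X Y Z); auto; simpl; tauto).
  assert (P2 : det3 y z x' * det3 y' z x' > 0) by (apply (sign_first Y Z X); auto; simpl; tauto).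
  assert (P3 : det3 z x' y' * det3 z' x' y' > 0) by (apply (sign_first Z X Y); auto; simpl; tauto).
  rewrite <- (det_rot x' y z), <- (det_rot x' y' z) in P2. rewrite (det_rot z x' y'), (det_rot z' x' y') in P3.
  eapply prod_trans; [eapply prod_trans; eassumption|eassumption].
Qed.

Lemma orient_eq x y z x' y' z' : det3 x y z * det3 x' y' z' > 0 -> orient x y z = orient x' y' z'.
Proof.
  intro H. unfold orient.
  destruct (Rlt_dec 0 (det3 x y z)); destruct (Rlt_dec 0 (det3 x' y' z'));
  try destruct (Rlt_dec (det3 x y z) 0); try destruct (Rlt_dec (det3 x' y' z') 0);
  try reflexivity; exfalso; destruct (prod_sign _ _ H); lra.
Qed.

Lemma orient_nz x y z : det3 x y z <> 0 -> orient x y z <> 0%Z.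
Proof.
  intro H. unfold orient.
  destruct (Rlt_dec 0 (det3 x y z)); [discriminate|].
  destruct (Rlt_dec (det3 x y z) 0); [discriminate|]. lra.
Qed.

Lemma o3_val X Y Z x y z : convex X -> convex Y -> convex Z -> ~ triple X Y Z ->
  witness_pts X Y Z (x,y,z) -> o3 X Y Z = orient x y z.
Proof.
  intros cX cY cZ N W. unfold o3.
  destruct (excluded_middle_informative _) as [e|n]; [contradiction|].
  pose proof (epsilon_spec (inhabits (point0,point0,point0)) (witness_pts X Y Z)
     (ex_intro _ (x,y,z) W)) as Hs.
  destruct (epsilon _ _) as [[a b] c].
  apply orient_eq. apply (indep X Y Z); auto.
Qed.

Lemma o3_triple X Y Z : triple X Y Z -> o3 X Y Z = 0%Z.
Proof.
  intro T. unfold o3. destruct (excluded_middle_informative _); [reflexivity|contradiction].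
Qed.

Lemma o3_zero X Y Z : convex X -> convex Y -> convex Z ->
  intersect Y Z -> intersect X Z -> intersect X Y -> o3 X Y Z = 0%Z -> triple X Y Z.
Proof.
  intros cX cY cZ [x Hx] [y Hy] [z Hz] H.
  destruct (classic (triple X Y Z)) as [|N]; auto. exfalso.
  assert (W : witness_pts X Y Z (x,y,z)) by (simpl; tauto).
  rewrite (o3_val X Y Z x y z) in H; auto.
  exact (orient_nz x y z (nondeg X Y Z x y z cX cY cZ N W) H).
Qed.

Definition all4 (S1 S2 S3 S4 : pset) q := S1 q /\ S2 q /\ S3 q /\ S4 q.
Definition cfg (S1 S2 S3 S4 : pset) p1 p2 p3 p4 :=
  (S2 p1 /\ S3 p1 /\ S4 p1) /\ (S1 p2 /\ S3 p2 /\ S4 p2) /\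
  (S1 p3 /\ S2 p3 /\ S4 p3) /\ (S1 p4 /\ S2 p4 /\ S3 p4).

Lemma case_in S1 S2 S3 S4 p1 p2 p3 p4 a b c : convex S4 -> cfg S1 S2 S3 S4 p1 p2 p3 p4 ->
  0 <= a -> 0 <= b -> 0 <= c -> a + b + c = 1 ->
  fst p4 = a * fst p1 + b * fst p2 + c * fst p3 ->
  snd p4 = a * snd p1 + b * snd p2 + c * snd p3 -> exists q, all4 S1 S2 S3 S4 q.
Proof.
  intros c4 C Ha Hb Hc Hs E1 E2. unfold cfg in C. exists p4. unfold all4.
  assert (S4 p4) by (apply (tri S4 p1 p2 p3 a b c); tauto). tauto.
Qed.

Lemma case_one S1 S2 S3 S4 p1 p2 p3 p4 a b c : convex S1 -> convex S2 -> convex S3 -> convex S4 ->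
  cfg S1 S2 S3 S4 p1 p2 p3 p4 ->
  a < 0 -> 0 <= b -> 0 <= c -> a + b + c = 1 ->
  fst p4 = a * fst p1 + b * fst p2 + c * fst p3 ->
  snd p4 = a * snd p1 + b * snd p2 + c * snd p3 -> exists q, all4 S1 S2 S3 S4 q.
Proof.
  intros c1 c2 c3 c4 C Ha Hb Hc Hs E1 E2. unfold cfg in C.
  exists ((b * fst p2 + c * fst p3)/(b+c), (b * snd p2 + c * snd p3)/(b+c)).
  assert (Bc : 0 < b + c) by lra.
  assert (W1 : 0 <= b/(b+c) <= 1) by (apply div_bounds; lra).
  assert (W2 : 0 <= c/(b+c) <= 1) by (apply div_bounds; lra).
  assert (W3 : 0 <= -a/(1-a) <= 1) by (apply div_bounds; lra).
  assert (W4 : 0 <= 1/(1-a) <= 1) by (apply div_bounds; lra).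
  unfold all4; repeat split.
  - apply (tri S1 p2 p3 p2 (b/(b+c)) (c/(b+c)) 0); try tauto; try lra;
      [field; lra| simpl; field; lra | simpl; field; lra].
  - apply (tri S2 p1 p4 p1 (-a/(1-a)) (1/(1-a)) 0); try tauto; try lra;
      [field; lra| simpl; rewrite E1 | simpl; rewrite E2];
      replace (b+c) with (1-a) by lra; field; lra.
  - apply (tri S3 p1 p4 p1 (-a/(1-a)) (1/(1-a)) 0); try tauto; try lra;
      [field; lra| simpl; rewrite E1 | simpl; rewrite E2];
      replace (b+c) with (1-a) by lra; field; lra.
  - apply (tri S4 p2 p3 p2 (b/(b+c)) (c/(b+c)) 0); try tauto; try lra;
      [field; lra| simpl; field; lra | simpl; field; lra].
Qed.

Lemma case_two S1 S2 S3 S4 p1 p2 p3 p4 a b c : convex S1 ->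
  cfg S1 S2 S3 S4 p1 p2 p3 p4 ->
  b < 0 -> c < 0 -> a + b + c = 1 ->
  fst p4 = a * fst p1 + b * fst p2 + c * fst p3 ->
  snd p4 = a * snd p1 + b * snd p2 + c * snd p3 -> exists q, all4 S1 S2 S3 S4 q.
Proof.
  intros c1 C Hb Hc Hs E1 E2. unfold cfg in C. exists p1. unfold all4.
  assert (W1 : 0 <= 1/a <= 1) by (apply div_bounds; lra).
  assert (W2 : 0 <= -b/a <= 1) by (apply div_bounds; lra).
  assert (W3 : 0 <= -c/a <= 1) by (apply div_bounds; lra).
  assert (S1 p1).
  { apply (tri S1 p4 p2 p3 (1/a) (-b/a) (-c/a)); try tauto; try lra;
      [replace (1/a + -b/a + -c/a) with ((1-b-c)/a) by (field; lra); replace (1-b-c) with a by lra; field; lra | rewrite E1; field; lra | rewrite E2; field; lra]. }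
  tauto.
Qed.

Ltac perm_cfg := unfold cfg in *; tauto.

Lemma core S1 S2 S3 S4 p1 p2 p3 p4 a b c : convex S1 -> convex S2 -> convex S3 -> convex S4 ->
  cfg S1 S2 S3 S4 p1 p2 p3 p4 -> a + b + c = 1 ->
  fst p4 = a * fst p1 + b * fst p2 + c * fst p3 ->
  snd p4 = a * snd p1 + b * snd p2 + c * snd p3 -> exists q, all4 S1 S2 S3 S4 q.
Proof.
  intros c1 c2 c3 c4 C Hs E1 E2.
  destruct (Rlt_or_le a 0) as [A|A]; destruct (Rlt_or_le b 0) as [B|B];
  destruct (Rlt_or_le c 0) as [Cc|Cc].
  - lra.
  -
    destruct (case_two S3 S1 S2 S4 p3 p1 p2 p4 c a b) as [q Q]; auto; try perm_cfg; try lra; try (rewrite ?E1, ?E2; ring).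
    exists q; unfold all4 in *; tauto.
  - destruct (case_two S2 S3 S1 S4 p2 p3 p1 p4 b c a) as [q Q]; auto; try perm_cfg; try lra; try (rewrite ?E1, ?E2; ring).
    exists q; unfold all4 in *; tauto.
  - apply (case_one S1 S2 S3 S4 p1 p2 p3 p4 a b c); auto.
  - apply (case_two S1 S2 S3 S4 p1 p2 p3 p4 a b c); auto.
  - destruct (case_one S2 S1 S3 S4 p2 p1 p3 p4 b a c) as [q Q]; auto; try perm_cfg; try lra; try (rewrite ?E1, ?E2; ring).
    exists q; unfold all4 in *; tauto.
  - destruct (case_one S3 S1 S2 S4 p3 p1 p2 p4 c a b) as [q Q]; auto; try perm_cfg; try lra; try (rewrite ?E1, ?E2; ring).
    exists q; unfold all4 in *; tauto.
  - apply (case_in S1 S2 S3 S4 p1 p2 p3 p4 a b c); auto.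
Qed.

Lemma helly4 S1 S2 S3 S4 : convex S1 -> convex S2 -> convex S3 -> convex S4 ->
  triple S2 S3 S4 -> triple S1 S3 S4 -> triple S1 S2 S4 -> triple S1 S2 S3 ->
  exists q, all4 S1 S2 S3 S4 q.
Proof.
  intros c1 c2 c3 c4 [p1 H1] [p2 H2] [p3 H3] [p4 H4].
  assert (C : cfg S1 S2 S3 S4 p1 p2 p3 p4) by (unfold cfg; tauto).
  destruct (Req_dec (det3 p1 p2 p3) 0) as [D|D].
  - unfold cfg in C. destruct (collinear p1 p2 p3 D) as [B|[B|B]].
    + exists p2. assert (S2 p2) by (apply (betw_in S2 p1 p3 p2); tauto). unfold all4; tauto.
    + exists p3. assert (S3 p3) by (apply (betw_in S3 p1 p2 p3); tauto). unfold all4; tauto.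
    + exists p1. assert (S1 p1) by (apply (betw_in S1 p2 p3 p1); tauto). unfold all4; tauto.
  - apply (core S1 S2 S3 S4 p1 p2 p3 p4 (det3 p4 p2 p3 / det3 p1 p2 p3)
      (det3 p1 p4 p3 / det3 p1 p2 p3) (det3 p1 p2 p4 / det3 p1 p2 p3)); auto;
    revert D; destruct p1, p2, p3, p4; unfold det3; simpl; intro D; field; auto.
Qed.

Theorem lemma4 (A1 A2 B1 B2 C1 C2 : pset) :
  compact_convex A1 -> compact_convex A2 -> compact_convex B1 ->
  compact_convex B2 -> compact_convex C1 -> compact_convex C2 ->
  pairwise_intersecting (A1 :: A2 :: B1 :: B2 :: C1 :: C2 :: nil) ->
  o4_zero A1 A2 B1 B2 -> o4_zero A1 A2 C1 C2 -> o4_zero B1 B2 C1 C2 ->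
  o3 A1 B1 C1 <> 0%Z -> o3 A2 B2 C2 <> 0%Z ->
  o3 A1 B1 C1 = o3 A2 B2 C2.
Proof.
  intros [_ a1] [_ a2] [_ b1] [_ b2] [_ c1] [_ c2] PW [O1 [O2 [O3 O4]]] [P1 [P2 [P3 P4]]]
    [Q1 [Q2 [Q3 Q4]]] N1 N2.
  assert (I : forall X Y, In X (A1 :: A2 :: B1 :: B2 :: C1 :: C2 :: nil) ->
     In Y (A1 :: A2 :: B1 :: B2 :: C1 :: C2 :: nil) -> intersect X Y) by exact PW.
  Ltac pw I := apply I; simpl; tauto.
  Ltac tr I := apply o3_zero; auto; pw I.
  destruct (helly4 A1 A2 B1 B2) as [z Z]; auto; try (tr I).
  destruct (helly4 A1 A2 C1 C2) as [y Y]; auto; try (tr I).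
  destruct (helly4 B1 B2 C1 C2) as [x X]; auto; try (tr I).
  unfold all4 in X, Y, Z.
  assert (T1 : ~ triple A1 B1 C1) by (intro T; apply N1; apply o3_triple; auto).
  assert (T2 : ~ triple A2 B2 C2) by (intro T; apply N2; apply o3_triple; auto).
  rewrite (o3_val A1 B1 C1 x y z); auto; [|simpl; tauto].
  rewrite (o3_val A2 B2 C2 x y z); auto. simpl; tauto.
Qed.
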